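(* Let $G\in\{GL_n,SO_{2n+1},Sp_{2n},SO_{2n}\}$, $I\subseteq\Sigma_G^+$, and let $\lambda,\mu\in\mathcal P_n$ with $|\lambda|\ge|\mu|$. Then for every integer $k\ge\frac{|\lambda|-|\mu|}{2}$: $$\widetilde K^{G,I}_{\lambda,\mu}(q)=K^{G,I}_{\lambda+k\kappa,\mu+k\kappa}(q)\quad\text{if }G=GL_n,Sp_{2n},SO_{2n},\qquad \widetilde K^{SO_{2n+1},I}_{\lambda,\mu}(q)=\mathcal K^{SO_{2n+1},I}_{\lambda+k\kappa,\mu+k\kappa}(q).$$
   Context: Notation: $|\beta|=\sum_i\beta_i$; $\kappa=(1,\dots,1)\in\mathbb N^n$; $\rho=(n,\dots,1)$; $\mathcal P_n$ = nonincreasing $n$-tuples of nonnegative integers. $\varepsilon_1,\dots,\varepsilon_n$ is the standard basis of $\mathbb R^n$, and $e^\beta=x^\beta=x_1^{\beta_1}\cdots x_n^{\beta_n}$. Positive roots: $R^+_{GL_n}=\{\varepsilon_i-\varepsilon_j:i<j\}$; $R^+_{SO_{2n+1}}=\{\varepsilon_i\pm\varepsilon_j:i<j\}\cup\{\varepsilon_i\}$; $R^+_{Sp_{2n}}=\{\varepsilon_i\pm\varepsilon_j:i<j\}\cup\{2\varepsilon_i\}$; $R^+_{SO_{2n}}=\{\varepsilon_i\pm\varepsilon_j:i<j\}$. Simple roots $\Sigma_G^+$: $\alpha_i=\varepsilon_i-\varepsilon_{i+1}$ ($1\le i\le n-1$), plus for $SO_{2n+1}$: $\alpha_n=\varepsilon_n$,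 for $Sp_{2n}$: $\alpha_n=2\varepsilon_n$, for $SO_{2n}$: $\alpha_n=\varepsilon_{n-1}+\varepsilon_n$. $W_G$: $S_n$ (permutations of coordinates, $(\sigma\beta)_i=\beta_{\sigma(i)}$) for $GL_n$; all signed permutations for $SO_{2n+1},Sp_{2n}$; signed permutations with an even number of sign changes for $SO_{2n}$; $(-1)^{\ell(w)}=\det w$. $\rho_G$: $\rho_{GL_n}=\rho$, $\rho_{SO_{2n+1}}=(n-\frac12,\dots,\frac12)$, $\rho_{Sp_{2n}}=(n,\dots,1)$, $\rho_{SO_{2n}}=(n-1,\dots,0)$; dot action $w\circ\beta=w(\beta+\rho_G)-\rho_G$. For $I\subseteq\Sigma_G^+$, let $R^+_{G,I}$ be the set of positive roots lying in the $\mathbb Z$-span of $I$ and $S_{G,I}=R^+_G\setminus R^+_{G,I}$. Define $\mathcal P_q^{G,I}$ by $\prod_{\alpha\in S_{G,I}}(1-qe^\alpha)^{-1}=\sum_\beta\mathcal P^{G,I}_q(\beta)e^\beta$, and for $SO_{2n+1}$ define $\mathcal P^{SO_{2n+1},I}_{q,h}$ by $\prod_{\alpha\in S_{SO_{2n+1},I}}(1-q^{h(\alpha)}e^\alpha)^{-1}=\sum_\beta\mathcal P^{SO_{2n+1},I}_{q,h}(\beta)e^\beta$ where $h(\varepsilon_i)=2$ and $h(\alpha)=1$ for other roots. For $\lambda,\mu\in\mathbb Z^n$: $K^{G,I}_{\lambda,\mu}(q)=\sum_{w\in W_G}(-1)^{\ell(w)}\mathcal P^{G,I}_q(w\circ\lambda-\mu)$;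 $\mathcal K^{SO_{2n+1},I}_{\lambda,\mu}(q)=\sum_{w\in W_G}(-1)^{\ell(w)}\mathcal P^{SO_{2n+1},I}_{q,h}(w\circ\lambda-\mu)$; and the stable limit $\widetilde K^{G,I}_{\lambda,\mu}(q)=\sum_{\sigma\in S_n}(-1)^{\ell(\sigma)}\mathcal P^{G,I}_q(\sigma\circ\lambda-\mu)$ for $G=GL_n,Sp_{2n},SO_{2n}$, and $\widetilde K^{SO_{2n+1},I}_{\lambda,\mu}(q)=\sum_{\sigma\in S_n}(-1)^{\ell(\sigma)}\mathcal P^{SO_{2n+1},I}_{q,h}(\sigma\circ\lambda-\mu)$. *)

(* Defs.v *)
From HB Require Import structures.
From mathcomp Require Import all_boot all_order all_algebra all_fingroup.
From Stdlib Require Import ClassicalDescription.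
Set Implicit Arguments. Unset Strict Implicit. Unset Printing Implicit Defensive.
Import Order.TTheory GRing.Theory Num.Theory.
Local Open Scope ring_scope.

Inductive gtype := GL | SOodd | Sp | SOeven.

(* weights: integer vectors in Z^n, indexed by 'I_n (coordinate i is 0-indexed) *)
Definition weight (n : nat) := {ffun 'I_n -> int}.

Definition eps n (i : 'I_n) : weight n := [ffun j => ((i == j) : nat)%:Z].

Definition kkappa n (k : int) : weight n := [ffun _ => k].

Definition wsize n (b : weight n) : int := \sum_i b i.

Definition is_partition n (b : weight n) : Prop :=
  (forall i, 0 <= b i) /\ (forall i j : 'I_n, (i <= j)%N -> b j <= b i).

Definition pos_roots (G : gtype) (n : nat) : seq (weight n) :=
  [seq eps i - eps j | i : 'I_n <- enum 'I_n, j : 'I_n <- [seq j : 'I_n <- enum 'I_n | (i < j)%N]] ++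
  (if G is GL then [::]
   else [seq eps i + eps j | i : 'I_n <- enum 'I_n, j : 'I_n <- [seq j : 'I_n <- enum 'I_n | (i < j)%N]]) ++
  match G with
  | SOodd => [seq eps i | i : 'I_n <- enum 'I_n]
  | Sp => [seq eps i *+ 2 | i : 'I_n <- enum 'I_n]
  | _ => [::]
  end.

(* simple roots Sigma^+_G:  alpha_i = eps_i - eps_{i+1} (1 <= i <= n-1), plus
   alpha_n = eps_n (SO_{2n+1}), 2 eps_n (Sp_{2n}), eps_{n-1} + eps_n (SO_{2n}) *)
Definition simple_roots (G : gtype) (n : nat) : seq (weight n) :=
  [seq eps i - eps j | i : 'I_n <- enum 'I_n, j : 'I_n <- [seq j : 'I_n <- enum 'I_n | j == i.+1 :> nat]] ++
  match G with
  | GL => [::]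
  | SOodd => [seq eps i | i : 'I_n <- [seq i : 'I_n <- enum 'I_n | i.+1 == n]]
  | Sp => [seq eps i *+ 2 | i : 'I_n <- [seq i : 'I_n <- enum 'I_n | i.+1 == n]]
  | SOeven => [seq eps i + eps j | i : 'I_n <- [seq i : 'I_n <- enum 'I_n | i.+2 == n],
                                   j : 'I_n <- [seq j : 'I_n <- enum 'I_n | j.+1 == n]]
  end.

Definition in_Zspan n (I : seq (weight n)) (a : weight n) : Prop :=
  exists c : weight n -> int, a = \sum_(x <- I) x *~ c x.

Definition decP (P : Prop) : bool :=
  if excluded_middle_informative P then true else false.

(* S_{G,I} = R^+_G \ R^+_{G,I} *)
Definition S_GI (G : gtype) n (I : seq (weight n)) : seq (weight n) :=
  [seq a <- pos_roots G n | ~~ decP (in_Zspan I a)].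

(* the linear form <rho, .>; it is >= 1 on every positive root of every G,
   so any solution of sum_j m_j alpha_j = beta (alpha_j positive) has
   m_j <= sum_j m_j <= phi beta; this bounds the multiplicities below. *)
Definition phi n (b : weight n) : int := \sum_(i : 'I_n) (n - i)%N%:Z * b i.

(* Coefficient of e^beta in prod_{alpha in S} (1 - q^{h alpha} e^alpha)^{-1},
   i.e. sum over multiplicity functions m : S -> N with sum_alpha m_alpha alpha = beta
   of q^{sum_alpha m_alpha h(alpha)}  (multiplicities bounded as explained above). *)
Definition kpf n (S : seq (weight n)) (h : weight n -> nat) (b : weight n) : {poly int} :=
  \sum_(m : {ffun 'I_(size S) -> 'I_(`|phi b|%N.+1)}
         | \sum_(j < size S) (nth (0%R : weight n) S j) *~ ((m j : nat) : int) == b)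
    'X^(\sum_(j < size S) (m j : nat) * h (nth (0%R : weight n) S j))%N.

Definition h_one n (_ : weight n) : nat := 1%N.
Definition h_SO n (a : weight n) : nat := if [exists i, a == eps i] then 2%N else 1%N.

Definition Pq (G : gtype) n (I : seq (weight n)) (b : weight n) : {poly int} :=
  kpf (S_GI G I) (@h_one n) b.
Definition Pqh n (I : seq (weight n)) (b : weight n) : {poly int} :=
  kpf (S_GI SOodd I) (@h_SO n) b.

(* signed permutations w = (sigma, s): (w beta)_i = (-1)^{s_i} beta_{sigma(i)} *)
Definition sperm n := ('S_n * {ffun 'I_n -> bool})%type.
Definition sact n (w : sperm n) (b : weight n) : weight n :=
  [ffun i => (-1) ^+ (w.2 i) * b (w.1 i)].
(* (-1)^{l(w)} = det w *)
Definition ssign n (w : sperm n) : int :=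
  (-1) ^+ (odd_perm w.1) * (-1) ^+ #|[pred i | w.2 i]|.
Definition no_flip n (w : sperm n) : bool := [forall i, ~~ w.2 i].
Definition inW (G : gtype) n (w : sperm n) : bool :=
  match G with
  | GL => no_flip w
  | SOeven => ~~ odd #|[pred i | w.2 i]|
  | _ => true
  end.

(* 2 rho_G (integral) *)
Definition rho2 (G : gtype) n : weight n :=
  [ffun i : 'I_n => match G with
                    | GL | Sp => ((n - i)%N.*2)%:Z
                    | SOodd => ((n - i)%N.*2)%:Z - 1
                    | SOeven => ((n - i.+1)%N.*2)%:Z
                    end].

(* dot action w o beta = w(beta + rho_G) - rho_G = w beta + (w(2 rho_G) - 2 rho_G)/2
   (the last division by 2 is exact coordinatewise) *)
Definition dot (G : gtype) n (w : sperm n) (b : weight n) : weight n :=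
  sact w b + [ffun i => ((sact w (rho2 G n) - rho2 G n) i %/ 2)%Z].

Definition Kq (G : gtype) n (I : seq (weight n)) (lam mu : weight n) : {poly int} :=
  \sum_(w : sperm n | inW G w) ssign w *: Pq G I (dot G w lam - mu).
Definition calKq n (I : seq (weight n)) (lam mu : weight n) : {poly int} :=
  \sum_(w : sperm n | inW SOodd w) ssign w *: Pqh I (dot SOodd w lam - mu).
(* stable limits (sum over S_n only) *)
Definition Ktilde (G : gtype) n (I : seq (weight n)) (lam mu : weight n) : {poly int} :=
  \sum_(w : sperm n | no_flip w) ssign w *: Pq G I (dot G w lam - mu).
Definition Ktilde_h n (I : seq (weight n)) (lam mu : weight n) : {poly int} :=
  \sum_(w : sperm n | no_flip w) ssign w *: Pqh I (dot SOodd w lam - mu).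

(* Main.v *)
Require Import Defs.
From HB Require Import structures.
From mathcomp Require Import all_boot all_order all_algebra all_fingroup.
From mathcomp Require Import zify ring lra.
Import Order.TTheory GRing.Theory Num.Theory.
Local Open Scope ring_scope.

Lemma wsizeD n (a b : weight n) : wsize (a + b) = wsize a + wsize b.
Proof. by rewrite /wsize -big_split; apply: eq_bigr => i _; rewrite ffunE. Qed.

Lemma wsize0 n : wsize (0 : weight n) = 0.
Proof. by rewrite /wsize big1 // => i _; rewrite ffunE. Qed.

Lemma wsizeMz n (a : weight n) z : wsize (a *~ z) = wsize a * z.
Proof. by rewrite /wsize mulr_suml; apply: eq_bigr => i _; rewrite ffunMzE mulrzz. Qed.

Lemma wsize_sum n (I : Type) (r : seq I) (P : pred I) (F : I -> weight n) :
  wsize (\sum_(i <- r | P i) F i) = \sum_(i <- r | P i) wsize (F i).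
Proof. exact: (big_morph _ (@wsizeD n) (@wsize0 n)). Qed.

Lemma wsize_eps n (i : 'I_n) : wsize (eps i) = 1.
Proof.
rewrite /wsize (bigD1 i) //= big1 => [|j ji]; rewrite ffunE ?eqxx ?addr0 //.
by rewrite eq_sym (negbTE ji).
Qed.

Lemma wsizeN n (a : weight n) : wsize (- a) = - wsize a.
Proof. by rewrite /wsize -sumrN; apply: eq_bigr => i _; rewrite ffunE. Qed.

Lemma pos_roots_ge0 G n a : a \in pos_roots G n -> 0 <= wsize a.
Proof.
rewrite /pos_roots !mem_cat => /orP [/allpairsPdep [i [j [_ _ ->]]]|].
  by rewrite wsizeD wsizeN !wsize_eps subrr.
move=> /orP [].
  case: G => //= /allpairsPdep [i [j [_ _ ->]]]; by rewrite wsizeD !wsize_eps.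
case: G => //= /mapP [i _ ->]; rewrite ?wsize_eps //.
have -> : wsize (eps i *+ 2) = wsize (eps i) + wsize (eps i) by rewrite mulr2n wsizeD.
by rewrite wsize_eps.
Qed.

Lemma kpf_vanish n (S : seq (weight n)) h b :
  (forall a, a \in S -> 0 <= wsize a) -> wsize b < 0 -> kpf S h b = 0.
Proof.
move=> Sge0 bneg; rewrite /kpf big_pred0 // => m.
apply/negbTE/eqP => E; move: bneg; rewrite -E wsize_sum.
apply/negP; rewrite -leNgt; apply: sumr_ge0 => j _.
by rewrite wsizeMz mulr_ge0 // Sge0 // mem_nth.
Qed.

Lemma S_GI_ge0 G n (I : seq (weight n)) a : a \in S_GI G I -> 0 <= wsize a.
Proof. by rewrite mem_filter => /andP [_]; apply: pos_roots_ge0. Qed.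

Lemma inW_noflip G n (w : sperm n) : no_flip w -> inW G w.
Proof.
move=> nf; case: G => //=.
move/forallP: nf => nf.
rewrite (_ : #|_| = 0%N) //; apply: eq_card0 => i; rewrite inE /=.
exact/negbTE/nf.
Qed.

Lemma shift_noflip G n (w : sperm n) lam mu k : no_flip w ->
  dot G w (lam + kkappa n k) - (mu + kkappa n k) = dot G w lam - mu.
Proof.
move/forallP => nf; apply/ffunP => i; rewrite /dot /sact !ffunE.
rewrite (negbTE (nf i)) expr0 !mul1r; ring.
Qed.

Definition gfl G n (w : sperm n) (lam : weight n) k (i : 'I_n) : int :=
  if w.2 i then 4 * (lam (w.1 i) + k) + 2 * rho2 G n (w.1 i) else 0.

Lemma dot_bound G n (w : sperm n) lam mu k (i : 'I_n) :
  2 * (dot G w (lam + kkappa n k) - (mu + kkappa n k)) i <=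
  (2 * lam (w.1 i) + rho2 G n (w.1 i)) - (2 * mu i + rho2 G n i)
   - gfl G n w lam k i.
Proof.
rewrite /gfl /dot /sact; move: (rho2 G n) => r; rewrite !ffunE.
set x := (_ - r i).
have hd : 2 * (x %/ 2)%Z <= x.
  rewrite [leRHS](divz_eq x 2) mulrC lerDl; exact: modz_ge0.
move: hd; rewrite /x; generalize (x %/ 2)%Z => d.
case: (w.2 i) => /=; rewrite ?expr0 ?expr1 ?mul1r ?mulN1r => hd; lia.
Qed.


Lemma wsize_bound G n (w : sperm n) lam mu k :
  2 * wsize (dot G w (lam + kkappa n k) - (mu + kkappa n k)) <=
  2 * (wsize lam - wsize mu) - \sum_i gfl G n w lam k i.
Proof.
rewrite /wsize mulr_sumr.
apply: le_trans (ler_sum _ (fun (i : 'I_n) _ => dot_bound G n w lam mu k i)) _.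
rewrite sumrB sumrB le_eqVlt; apply/orP; left; apply/eqP.
congr (_ - _).
have -> : \sum_(i < n) (2 * lam (w.1 i) + rho2 G n (w.1 i)) = \sum_(i < n) (2 * lam i + rho2 G n i).
  by rewrite [RHS](reindex_inj (@perm_inj _ w.1)).
rewrite -sumrB mulrBr !mulr_sumr -sumrB; apply: eq_bigr => i _; ring.
Qed.

Lemma flip_pos G n (w : sperm n) : inW G w -> ~~ no_flip w ->
  exists2 i, w.2 i & 0 < rho2 G n (w.1 i).
Proof.
move=> hW; rewrite /no_flip negb_forall => /existsP [i0]; rewrite negbK => s0.
case: G hW => /= hW.
- by move/forallP: hW => /(_ i0); rewrite s0.
- exists i0 => //; rewrite ffunE; have := ltn_ord (w.1 i0); lia.
- exists i0 => //; rewrite ffunE; have := ltn_ord (w.1 i0); lia.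
have : (0 < #|[predD1 [pred i | w.2 i] & i0]|)%N.
  move: hW; rewrite (cardD1 i0) inE s0 /=.
  by case: #|_|.
case/card_gt0P => i1; rewrite !inE => /andP [ne10 s1].
have hne : (w.1 i1 : nat) != w.1 i0.
  by apply: contra ne10 => /eqP/val_inj/perm_inj ->.
have h0 := ltn_ord (w.1 i0); have h1 := ltn_ord (w.1 i1).
case: (ltnP (w.1 i0).+1 n) => hc.
  exists i0 => //; rewrite ffunE; lia.
exists i1 => //; rewrite ffunE; move: hne; rewrite -eqnE; lia.
Qed.

Lemma rho2_ge0 G n (j : 'I_n) : 0 <= rho2 G n j.
Proof. rewrite ffunE; have := ltn_ord j; case: G; lia. Qed.

Lemma gfl_ge0 G n (w : sperm n) (lam : weight n) (k : int) (i : 'I_n) :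
  (forall i, 0 <= lam i) -> 0 <= k -> 0 <= gfl G n w lam k i.
Proof.
move=> hl hk; rewrite /gfl; case: (w.2 i) => //.
have := hl (w.1 i); have := rho2_ge0 G n (w.1 i); lia.
Qed.

Lemma term_neg G n (w : sperm n) (lam mu : weight n) (k : int) : inW G w -> ~~ no_flip w ->
  (forall i, 0 <= lam i) -> 0 <= k -> wsize lam - wsize mu <= 2 * k ->
  wsize (dot G w (lam + kkappa n k) - (mu + kkappa n k)) < 0.
Proof.
move=> hW nf hl hk hd.
have hb := wsize_bound G n w lam mu k.
case: (flip_pos G n w hW nf) => i0 s0 r0.
have hg : 4 * k + 2 <= \sum_i gfl G n w lam k i.
  rewrite (bigD1 i0) //=.
  set S := \sum_(i < n | i != i0) _.
  have hS : 0 <= S by apply: sumr_ge0 => i _; exact: gfl_ge0.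
  clearbody S.
  have -> : gfl G n w lam k i0 = 4 * (lam (w.1 i0) + k) + 2 * rho2 G n (w.1 i0) by rewrite /gfl s0.
  have := hl (w.1 i0); lia.
have h1 := le_trans hb (lerB (lexx _) hg).
move: h1 hd; generalize (wsize (dot G w (lam + kkappa n k) - (mu + kkappa n k))) => x.
lia.
Qed.

Lemma main_gen G n (P : weight n -> {poly int}) (lam mu : weight n) (k : int) :
  (forall b, wsize b < 0 -> P b = 0) ->
  (forall i, 0 <= lam i) -> 0 <= k -> wsize lam - wsize mu <= 2 * k ->
  \sum_(w : sperm n | no_flip w) ssign w *: P (dot G w lam - mu) =
  \sum_(w : sperm n | inW G w) ssign w *: P (dot G w (lam + kkappa n k) - (mu + kkappa n k)).
Proof.
move=> P0 hl hk hd.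
rewrite [RHS](bigID (@no_flip n)) /= [X in _ + X]big1 ?addr0; last first.
  move=> w /andP [hW nf]; rewrite P0 ?scaler0 //; exact: term_neg.
apply: eq_big => [w|w nf]; last by rewrite shift_noflip.
by case nf: (no_flip w); rewrite ?andbT ?andbF // inW_noflip.
Qed.

Theorem mainTheorem2 (G : gtype) (n : nat) (I : seq (weight n))
    (lam mu : weight n) (k : int) :
  {subset I <= simple_roots G n} ->
  is_partition lam -> is_partition mu ->
  wsize mu <= wsize lam ->
  wsize lam - wsize mu <= 2 * k ->
  if G is SOodd then
    Ktilde_h I lam mu = calKq I (lam + kkappa n k) (mu + kkappa n k)
  else
    Ktilde G I lam mu = Kq G I (lam + kkappa n k) (mu + kkappa n k).
Proof.
move=> _ [hl _] _ hle hd.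
have hk : 0 <= k by lia.
case: G => /=; apply: main_gen => // b hb; apply: kpf_vanish => //;
  move=> a; exact: S_GI_ge0.
Qed.
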